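(* Let $G_0$ be a directed multigraph on vertex set $\{0,1,\dots,n+1\}$, each edge $(p,q)$ oriented $p\to q$ with $p<q$, and suppose $(i,j),(j,k)\in E(G_0)$ for some $i<j<k$. Let $G_1$ and $G_2$ be the multigraphs on the same vertex set with edge multisets $$E(G_1)=E(G_0)\setminus\{(j,k)\}\cup\{(i,k)\},\qquad E(G_2)=E(G_0)\setminus\{(i,j)\}\cup\{(i,k)\}$$ (one copy removed, one copy added). For $r\in[n]$ let $d_r=\operatorname{indeg}_{G_0}(r)-1$, $d_r'=\operatorname{indeg}_{G_1}(r)-1$, $d_r''=\operatorname{indeg}_{G_2}(r)-1$, and set $\mathbf d=(0,d_1,\dots,d_n,-\sum_{r=1}^n d_r)$, $\mathbf d_1=(0,d'_1,\dots,d'_n,-\sum_{r=1}^n d'_r)$, $\mathbf d_2=(0,d''_1,\dots,d''_n,-\sum_{r=1}^n d''_r)$. Then $$K_{G_0}(\mathbf d)=K_{G_1}(\mathbf d_1)+K_{G_2}(\mathbf d_2).$$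
   Context: For a directed multigraph $G$ on $\{0,\dots,n+1\}$ and a vector $\mathbf a=(a_0,\dots,a_{n+1})$ with $\sum_i a_i=0$, the flow polytope $\mathcal F_G(\mathbf a)$ is the set of $f\in\mathbb R_{\ge0}^{E(G)}$ such that at each vertex $v$ the net flow (outgoing minus incoming) equals $a_v$, and $K_G(\mathbf a)$ is the number of integer points of $\mathcal F_G(\mathbf a)$. *)

(* Defs.v *)
From HB Require Import structures.
From mathcomp Require Import all_boot all_order all_algebra.
From mathcomp Require Import finmap.
From mathcomp Require Import boolp classical_sets cardinality.
Set Implicit Arguments. Unset Strict Implicit. Unset Printing Implicit Defensive.
Import Order.TTheory GRing.Theory Num.Theory.

Local Open Scope ring_scope.

(* A directed multigraph on the vertex set {0,...,n+1} = 'I_(n+2) is a list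
   of edges (p, q), each oriented p -> q; repeated entries are parallel edges. *)
Definition mgraph (n : nat) := seq ('I_(n.+2) * 'I_(n.+2)).

Definition flow_vec (n : nat) (G : mgraph n) := {ffun 'I_(size G) -> nat}.

Definition netflow (n : nat) (G : mgraph n) (f : flow_vec G) (v : 'I_(n.+2)) : int :=
  (\sum_(e : 'I_(size G) | (nth (v, v) G e).1 == v) (f e)%:Z)
  - (\sum_(e : 'I_(size G) | (nth (v, v) G e).2 == v) (f e)%:Z).

Definition int_flows (n : nat) (G : mgraph n) (a : 'I_(n.+2) -> int) : set (flow_vec G) :=
  [set f | forall v, netflow f v = a v].
Arguments int_flows {n} G a.

(* K_G(a) = number of integer points of F_G(a) (fset_set of a finite set is
   that set; the set is finite for the graphs considered, edges p -> q, p < q). *)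
Definition K (n : nat) (G : mgraph n) (a : 'I_(n.+2) -> int) : nat :=
  #|` fset_set (int_flows G a)|%fset.

Definition indeg (n : nat) (G : mgraph n) (r : 'I_(n.+2)) : nat :=
  count (fun e => e.2 == r) G.

Definition dvec (n : nat) (G : mgraph n) : 'I_(n.+2) -> int :=
  fun v =>
    if (v : nat) == 0%N then 0
    else if (v : nat) == n.+1 then
      - (\sum_(r : 'I_(n.+2) | (0 < r <= n)%N) ((indeg G r)%:Z - 1))
    else (indeg G v)%:Z - 1.

(* Main.v *)
Require Import Defs.
From HB Require Import structures.
From mathcomp Require Import all_boot all_order all_algebra.
From mathcomp Require Import finmap.
From mathcomp Require Import boolp classical_sets cardinality.
From mathcomp Require Import ring zify.
Set Implicit Arguments. Unset Strict Implicit. Unset Printing Implicit Defensive.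
Import Order.TTheory GRing.Theory Num.Theory.
Local Open Scope classical_set_scope.
Local Open Scope ring_scope.
Definition w n (p : 'I_(n.+2) * 'I_(n.+2)) (x : nat) (v : 'I_(n.+2)) : int :=
  x%:Z * ((p.1 == v)%:Z - (p.2 == v)%:Z).
Definition nf n (G : mgraph n) (s : seq nat) v : int := \sum_(p <- zip G s) w p.1 p.2 v.
Definition SL n (G : mgraph n) (a : 'I_(n.+2) -> int) : set (seq nat) :=
  [set s | size s = size G /\ forall v, nf G s v = a v].
Definition K' n (G : mgraph n) a := #|` fset_set (SL G a)|%fset.

Lemma card_img (T U : choiceType) (h : T -> U) (A : set T) : finite_set A ->
  (forall x y, A x -> A y -> h x = h y -> x = y) ->
  #|` fset_set (h @` A)|%fset = #|` fset_set A|%fset.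
Proof.
move=> fA inj; rewrite fset_set_image //; apply/eqP/card_in_imfsetP.
move=> x y; rewrite !in_fset_set // !inE; exact: inj.
Qed.

Lemma nf_idx n (G : mgraph n) s v : size s = size G ->
  nf G s v = \sum_(e < size G) w (nth (v,v) G e) (nth 0%N s e) v.
Proof.
move=> Hs; rewrite /nf (big_nth ((v,v),0%N)) size_zip Hs minnn big_mkord.
by apply: eq_bigr => e _; rewrite nth_zip.
Qed.

Lemma netflow_idx n (G : mgraph n) (f : flow_vec G) v :
  netflow f v = \sum_(e < size G) w (nth (v,v) G e) (f e) v.
Proof.
rewrite /netflow !(big_mkcond (fun e : 'I_(size G) => _ == v)) -sumrB.
apply: eq_bigr => e _; rewrite /w.
by case: eqP => _; case: eqP => _ /=; rewrite ?subr0 ?sub0r ?subrr ?mulr0 ?mulr1 ?mulrN1.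
Qed.

Lemma K_SL n (G : mgraph n) a : finite_set (SL G a) -> K G a = K' G a.
Proof.
move=> fin; rewrite /K /K'.
pose g (s : seq nat) : flow_vec G := [ffun e : 'I_(size G) => nth 0%N s e].
have -> : int_flows G a = g @` SL G a.
  apply/seteqP; split => [f /= Hf | _ [s [Hs Hn] <-]].
    have Hsz : size (map f (enum 'I_(size G))) = size G by rewrite size_map size_enum_ord.
    exists (map f (enum 'I_(size G))).
      split; first by [].
      move=> v; rewrite -Hf netflow_idx nf_idx //.
      apply: eq_bigr => e _; congr w; rewrite (nth_map e) ?size_enum_ord //.
      by congr (f _); apply: val_inj; rewrite /= nth_enum_ord.
    rewrite /g; apply/ffunP => e; rewrite ffunE (nth_map e) ?size_enum_ord //.
    by congr (f _); apply: val_inj; rewrite /= nth_enum_ord.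
  move=> v; rewrite /= netflow_idx -Hn nf_idx //.
  by apply: eq_bigr => e _; rewrite ffunE.
apply: card_img => // s t [Hs _] [Ht _] /ffunP E.
apply: (@eq_from_nth _ 0%N); first by rewrite Hs Ht.
move=> q; rewrite Hs => lq; have := E (Ordinal lq); by rewrite !ffunE.
Qed.

Lemma zip_map2 (I A B : Type) (f : I -> A) (g : I -> B) (l : seq I) :
  zip (map f l) (map g l) = map (fun i => (f i, g i)) l.
Proof. by elim: l => //= x l ->. Qed.

Lemma SL_perm n (G G' : mgraph n) a : perm_eq G' G ->
  exists h : seq nat -> seq nat, SL G' a = h @` SL G a /\
    (forall x y, SL G a x -> SL G a y -> h x = h y -> x = y).
Proof.
case/(perm_iotaP (ord0, ord0)) => Is pIs ->.
have uIs : uniq Is by rewrite (perm_uniq pIs) iota_uniq.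
have mIs q : (q \in Is) = (q < size G)%N by rewrite (perm_mem pIs) mem_iota.
have szIs : size Is = size G by rewrite (perm_size pIs) size_iota.
pose h (s : seq nat) := map (nth 0%N s) Is.
have nfh s v : size s = size G -> nf (map (nth (ord0, ord0) G) Is) (h s) v = nf G s v.
  move=> Hs; rewrite /nf /h zip_map2.
  have -> : zip G s = map (fun i => (nth (ord0,ord0) G i, nth 0%N s i)) (iota 0 (size G)).
    by rewrite -{1}(mkseq_nth (ord0,ord0) G) -{1}(mkseq_nth 0%N s) Hs /mkseq zip_map2.
  by apply: perm_big; apply: perm_map.
exists h; split; last first.
  move=> s t [Hs _] [Ht _] E; apply: (@eq_from_nth _ 0%N); first by rewrite Hs Ht.
  move=> q; rewrite Hs -mIs => qI.
  have := congr1 (fun l => nth 0%N l (index q Is)) E.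
  rewrite /h !(nth_map 0%N) ?index_mem // nth_index //.
apply/seteqP; split => [s' /= [Hs' Hn] | _ [s [Hs Hn] <-]]; last first.
  split; first by rewrite /h !size_map.
  by move=> v; rewrite nfh.
rewrite size_map in Hs'.
pose s := map (fun i => nth 0%N s' (index i Is)) (iota 0 (size G)).
have Hs : size s = size G by rewrite size_map size_iota.
have hs : h s = s'.
  apply: (@eq_from_nth _ 0%N); first by rewrite size_map.
  move=> p; rewrite size_map => lp.
  have lq : (nth 0%N Is p < size G)%N by rewrite -mIs mem_nth.
  rewrite /h (nth_map 0%N) // (nth_map 0%N) ?size_iota // nth_iota // add0n.
  by rewrite index_uniq.
exists s => //; split => // v; rewrite -nfh // hs; exact: Hn.
Qed.

Lemma K'_perm n (G G' : mgraph n) a : perm_eq G' G -> finite_set (SL G a) ->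
  K' G' a = K' G a /\ finite_set (SL G' a).
Proof.
case/(SL_perm a) => h [E inj] fin; rewrite /K' E; split; first exact: card_img.
exact: finite_image.
Qed.

Lemma sum_ind N (P : pred 'I_N) (c : 'I_N) :
  \sum_(v | P v) ((c == v) : nat)%:Z = (P c : nat)%:Z.
Proof.
case Pc: (P c).
  rewrite (bigD1 c) //= eqxx big1 ?addr0 // => v /andP[_ /negbTE].
  by rewrite eq_sym => ->.
by rewrite big1 // => v Pv; case: eqP => // E; rewrite E Pv in Pc.
Qed.

Lemma SL_bound n (G : mgraph n) a s : (forall e, e \in G -> (e.1 < e.2)%N) ->
  SL G a s -> forall q, (q < size G)%N ->
  (nth 0%N s q)%:Z <= \sum_v `|a v|.
Proof.
move=> inc [Hs Hn] q lq.
set m := (nth (ord0, ord0) G q).2.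
pose T (e : 'I_(size G)) := (nth 0%N s e)%:Z *
   (((m <= (nth (ord0,ord0) G e).1)%N : nat)%:Z - ((m <= (nth (ord0,ord0) G e).2)%N : nat)%:Z).
have ES : \sum_(v : 'I_(n.+2) | (m <= v)%N) a v = \sum_e T e.
  have Hv v : a v = \sum_(e < size G) w (nth (ord0, ord0) G e) (nth 0%N s e) v.
    rewrite -Hn nf_idx //; apply: eq_bigr => e _.
    by rewrite (set_nth_default (ord0,ord0)).
  rewrite (eq_bigr _ (fun v _ => Hv v)) exchange_big /=; apply: eq_bigr => e _.
  rewrite /T /w -mulr_sumr sumrB.
  by rewrite (sum_ind (fun v : 'I_(n.+2) => (m <= v)%N)) (sum_ind (fun v : 'I_(n.+2) => (m <= v)%N)).
have Tle e : T e <= 0.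
  have := inc _ (mem_nth (ord0, ord0) (ltn_ord e)).
  rewrite /T; case: (nth _ G e) => /= p1 p2 lp.
  case: (leqP m p1) => h1; case: (leqP m p2) => h2 //=; rewrite ?subrr ?mulr0 //.
    by exfalso; lia.
  by rewrite sub0r mulrN1 oppr_le0.
have Tq : T (Ordinal lq) = - (nth 0%N s q)%:Z.
  rewrite /T /= leqnn /=.
  have := inc _ (mem_nth (ord0, ord0) lq); rewrite -/m => h.
  by rewrite leqNgt h /= sub0r mulrN1.
have : \sum_(v : 'I_(n.+2) | (m <= v)%N) a v <= - (nth 0%N s q)%:Z.
  rewrite ES (bigD1 (Ordinal lq)) //= Tq -[X in _ <= X]addr0 lerD2l.
  by apply: sumr_le0 => e _; apply: Tle.
have : - (\sum_v `|a v|) <= \sum_(v : 'I_(n.+2) | (m <= v)%N) a v.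
  rewrite lerNl; apply: le_trans (ler_norm _) _; rewrite normrN.
  apply: le_trans (ler_norm_sum _ _ _) _.
  rewrite [X in _ <= X](bigID (fun v : 'I_(n.+2) => (m <= v)%N)) /= lerDl.
  by apply: sumr_ge0.
move=> h1 h2; have := le_trans h1 h2; by rewrite lerN2.
Qed.

Lemma SL_finite n (G : mgraph n) a : (forall e, e \in G -> (e.1 < e.2)%N) ->
  finite_set (SL G a).
Proof.
move=> inc.
set Sz : int := \sum_v `|a v|.
set B := absz Sz.
have Bs s q : SL G a s -> (q < size G)%N -> (nth 0%N s q < B.+1)%N.
  move=> Hs lq; have := SL_bound inc Hs lq; rewrite -/Sz /B => h; lia.
pose F (g : {ffun 'I_(size G) -> 'I_B.+1}) := map (fun e => val (g e)) (enum 'I_(size G)).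
apply: (@sub_finite_set _ _ (F @` setT)); last exact: finite_image finite_finset.
move=> s Hs; exists [ffun e : 'I_(size G) => (inord (nth 0%N s e) : 'I_B.+1)] => //.
have [Hsz _] := Hs.
apply: (@eq_from_nth _ 0%N); first by rewrite size_map size_enum_ord.
move=> q; rewrite size_map size_enum_ord => lq.
rewrite (nth_map (Ordinal lq)) ?size_enum_ord // ffunE /= inordK; last first.
  by rewrite nth_enum_ord //; apply: Bs.
by rewrite nth_enum_ord.
Qed.

Lemma nf_cons n (g : 'I_(n.+2) * 'I_(n.+2)) (G : mgraph n) x s v :
  nf (g :: G) (x :: s) v = w g x v + nf G s v.
Proof. by rewrite /nf /= big_cons. Qed.

Lemma nf1 n (i j k : 'I_(n.+2)) (H : mgraph n) x y t v : (y <= x)%N ->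
  nf [:: (i,k), (i,j) & H] (y :: (x - y)%N :: t) v = nf [:: (i,j), (j,k) & H] (x :: y :: t) v.
Proof.
move=> yx; rewrite !nf_cons /w /= -subzn //.
by ring.
Qed.

Lemma nf2 n (i j k : 'I_(n.+2)) (H : mgraph n) x y t v : (x < y)%N ->
  nf [:: (i,k), (j,k) & H] (x :: (y - x).-1 :: t) v =
  nf [:: (i,j), (j,k) & H] (x :: y :: t) v - (j == v)%:Z + (k == v)%:Z.
Proof.
move=> xy; rewrite !nf_cons /w /=.
have -> : ((y - x).-1)%:Z = y%:Z - x%:Z - 1.
  lia.
by ring.
Qed.

Lemma dvec_ext n (G G' : mgraph n) : (forall r, indeg G r = indeg G' r) -> dvec G = dvec G'.
Proof.
move=> Hc; apply/funext => v; rewrite /dvec.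
by under eq_bigr do rewrite Hc; rewrite Hc.
Qed.

Lemma dvec_perm n (G G' : mgraph n) : perm_eq G G' -> dvec G = dvec G'.
Proof. by move=> /permP h; apply: dvec_ext => r; rewrite /indeg h. Qed.

Lemma dvec1 n (i j k : 'I_(n.+2)) (H : mgraph n) :
  dvec [:: (i,k), (i,j) & H] = dvec [:: (i,j), (j,k) & H].
Proof. by apply: dvec_ext => r; rewrite /indeg /= addnCA. Qed.

Lemma dvec2 n (i j k : 'I_(n.+2)) (H : mgraph n) v : (i < j)%N -> (j < k)%N ->
  dvec [:: (i,k), (j,k) & H] v = dvec [:: (i,j), (j,k) & H] v - (j == v)%:Z + (k == v)%:Z.
Proof.
move=> ij jk.
have Hc r : (indeg [:: (i,k), (j,k) & H] r)%:Z =
    (indeg [:: (i,j), (j,k) & H] r)%:Z - (j == r)%:Z + (k == r)%:Z.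
  by rewrite /indeg /= !PoszD; ring.
have kn : (k < n.+2)%N := ltn_ord k.
rewrite /dvec; case: eqP => [v0|_].
  have -> : (j == v) = false by apply/negP => /eqP E; rewrite -E in v0; lia.
  have -> : (k == v) = false by apply/negP => /eqP E; rewrite -E in v0; lia.
  by rewrite subr0 addr0.
case: eqP => [vn|_]; last by rewrite Hc; ring.
have -> : (j == v) = false by apply/negP => /eqP E; rewrite -E in vn; lia.
under eq_bigr do rewrite Hc.
rewrite (eq_bigr (fun r : 'I_(n.+2) => ((indeg [:: (i, j), (j, k) & H] r)%:Z - 1)
   + (k == r)%:Z - (j == r)%:Z)); last by move=> r _; ring.
rewrite sumrB big_split /= !(sum_ind (fun r : 'I_(n.+2) => (0 < r <= n)%N)) /=.
have -> : (0 < j <= n)%N by apply/andP; split; lia.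
have -> : (k == v) = ~~ (0 < k <= n)%N.
  apply/eqP/idP.
    by move=> E; rewrite -E in vn; rewrite vn; apply/negP => /andP[_]; lia.
  move=> h; apply: val_inj; rewrite /= vn; move: h; rewrite negb_and; lia.
by case: (0 < k <= n)%N => /=; ring.
Qed.

Definition Pc (s : seq nat) := if s is x :: y :: _ then (y <= x)%N else true.
Definition phi1 (s : seq nat) := if s is x :: y :: t then y :: (x - y)%N :: t else s.
Definition phi2 (s : seq nat) := if s is x :: y :: t then x :: (y - x).-1 :: t else s.

Theorem lemma3p3 (n : nat) (G0 : mgraph n) (i j k : 'I_(n.+2)) :
  (forall e, e \in G0 -> (e.1 < e.2)%N) ->
  (i < j)%N -> (j < k)%N ->
  (i, j) \in G0 -> (j, k) \in G0 ->
  let G1 : mgraph n := (i, k) :: rem (j, k) G0 in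
  let G2 : mgraph n := (i, k) :: rem (i, j) G0 in
  K G0 (dvec G0) = (K G1 (dvec G1) + K G2 (dvec G2))%N.
Proof.
move=> inc ij jk ijG jkG G1 G2.
set H := rem (i,j) (rem (j,k) G0).
have neq : (i,j) != (j,k).
  apply/negP => /eqP [E _]; by rewrite E ltnn in ij.
have ijR : (i,j) \in rem (j,k) G0 := rem_mem neq ijG.
have P0 : perm_eq G0 [:: (i,j), (j,k) & H].
  apply: perm_trans (perm_to_rem jkG) _.
  apply: (@perm_trans _ [:: (j,k), (i,j) & H]); first by rewrite perm_cons perm_to_rem.
  by apply/permP => p /=; rewrite addnCA.
have P1 : perm_eq G1 [:: (i,k), (i,j) & H] by rewrite /G1 perm_cons perm_to_rem.
have P2 : perm_eq G2 [:: (i,k), (j,k) & H].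
  rewrite /G2 perm_cons -(perm_cons (i,j)).
  apply: perm_trans _ P0; rewrite perm_sym; exact: perm_to_rem ijG.
rewrite (dvec_perm P0) (dvec_perm P1) (dvec_perm P2) dvec1.
set G0' := [:: (i,j), (j,k) & H].
set G1' := [:: (i,k), (i,j) & H].
set G2' := [:: (i,k), (j,k) & H].
set d := dvec G0'.
set d2 := dvec G2'.
have fin0 : finite_set (SL G0 d) := SL_finite d inc.
have P0' : perm_eq G0' G0 by rewrite perm_sym.
have [E0 fin0'] := K'_perm P0' fin0.
pose A1 := SL G0' d `&` [set s | Pc s].
pose A2 := SL G0' d `&` [set s | ~~ Pc s].
have fA1 : finite_set A1 by apply: finite_setIl.
have fA2 : finite_set A2 by apply: finite_setIl.
have E1 : SL G1' d = phi1 @` A1.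
  apply/seteqP; split => [s' [Hs Hn] | _ [s [[Hs Hn] Ps] <-]].
    case: s' Hs Hn => [|z [|u t]] //= Hs Hn.
    exists [:: (u + z)%N, z & t]; last by rewrite /= addnK.
    split; last by rewrite /= leq_addl.
    split => // v; rewrite -Hn -nf1 ?leq_addl // addnK //.
  case: s Hs Hn Ps => [|x [|y t]] //= Hs Hn Ps.
  split => // v; rewrite nf1 //.
have E2 : SL G2' d2 = phi2 @` A2.
  apply/seteqP; split => [s' [Hs Hn] | _ [s [[Hs Hn] Ps] <-]].
    case: s' Hs Hn => [|z [|u t]] //= Hs Hn.
    have h1 : (z < u + z + 1)%N by lia.
    have h2 : ((u + z + 1 - z).-1 = u)%N by lia.
    exists [:: z, (u + z + 1)%N & t]; last by rewrite /= h2.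
    split; last by rewrite /= -ltnNge.
    split => // v; have h := Hn v; rewrite -h2 nf2 // /d2 dvec2 // in h.
    apply: (@addIr _ (- (j==v)%:Z + (k==v)%:Z)); rewrite !addrA; exact: h.
  case: s Hs Hn Ps => [|x [|y t]] //= Hs Hn Ps.
  rewrite -ltnNge in Ps.
  split => // v; rewrite nf2 // Hn /d2 dvec2 //.
have inj1 : forall x y, A1 x -> A1 y -> phi1 x = phi1 y -> x = y.
  move=> [|x1 [|y1 t1]] [|x2 [|y2 t2]] [[//= Hs1 _] P1'] [[//= Hs2 _] P2'] /=;
    rewrite ?Hs1 ?Hs2 //= => -[e1 e2 e3]; subst.
  move: P1' P2'; rewrite /= => l1 l2; congr (_ :: _ :: _); lia.
have inj2 : forall x y, A2 x -> A2 y -> phi2 x = phi2 y -> x = y.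
  move=> [|x1 [|y1 t1]] [|x2 [|y2 t2]] [[//= Hs1 _] P1'] [[//= Hs2 _] P2'] /=;
    rewrite ?Hs1 ?Hs2 //= => -[e1 e2 e3]; subst.
  move: P1' P2'; rewrite /= -!ltnNge => l1 l2; congr (_ :: _ :: _); lia.
have fin1' : finite_set (SL G1' d) by rewrite E1; apply: finite_image.
have fin2' : finite_set (SL G2' d2) by rewrite E2; apply: finite_image.
have [K1 fin1] := K'_perm P1 fin1'.
have [K2 fin2] := K'_perm P2 fin2'.
rewrite (K_SL fin0) (K_SL fin1) (K_SL fin2) -E0 K1 K2 /K' E1 E2 !card_img //.
have -> : SL G0' d = A1 `|` A2.
  apply/seteqP; split => [s Hs | s [[Hs _]|[Hs _]] //].
  by case: (boolP (Pc s)) => h; [left | right].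
rewrite fset_setU // -cardfsUI -fset_setI //.
have -> : A1 `&` A2 = set0.
  by apply/seteqP; split => // s [[_ /= h1] [_ /= h2]]; rewrite h1 in h2.
by rewrite fset_set0 cardfs0 addn0.
Qed.
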